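(* Let $I,J$ be infinite sets with $|I|<|J|$. Then $\mathbf{Lat}_I$ does not have 2-fold subobject decompositions over $J$: there exist a family $(L_j)_{j\in J}$ of $I$-complete lattices and two distinct $I$-complete sublattices $S\neq T$ of $\prod_{j\in J}L_j$ whose images under the projection $\prod_{j\in J}L_j\to L_k\times L_l$ coincide for all distinct $k,l\in J$.
   Context: An $I$-complete lattice is a lattice in which every family $(x_i)_{i\in I}$ of elements has a meet and a join; homomorphisms preserve $I$-indexed meets and joins; $\mathbf{Lat}_I$ is the resulting category, with componentwise products and with subobjects the $I$-complete sublattices. A category has 2-fold subobject decompositions over $J$ if for every $J$-indexed family of objects, any two subobjects of their product having the same images in all products $L_k\times L_l$ ($k\neq l$ in $J$) are equal. *)

(* Defs.v *)
From Stdlib Require Import List.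

Set Implicit Arguments.

Definition infinite (T : Type) : Prop :=
  ~ (exists l : list T, forall x : T, In x l).

Definition card_lt (I J : Type) : Prop :=
  (exists f : I -> J, forall x y, f x = f y -> x = y) /\
  ~ (exists g : J -> I, forall x y, g x = g y -> x = y).

Section Order.
Variable (L : Type) (le : L -> L -> Prop).

Definition is_partial_order : Prop :=
  (forall x, le x x) /\
  (forall x y z, le x y -> le y z -> le x z) /\
  (forall x y, le x y -> le y x -> x = y).

Definition is_glb (K : Type) (f : K -> L) (m : L) : Prop :=
  (forall k, le m (f k)) /\ (forall z, (forall k, le z (f k)) -> le z m).

Definition is_lub (K : Type) (f : K -> L) (s : L) : Prop :=
  (forall k, le (f k) s) /\ (forall z, (forall k, le (f k) z) -> le s z).

Definition is_lattice : Prop :=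
  is_partial_order /\
  (forall f : bool -> L, exists m, is_glb f m) /\
  (forall f : bool -> L, exists s, is_lub f s).

Definition is_I_complete_lattice (I : Type) : Prop :=
  is_lattice /\
  (forall f : I -> L, exists m, is_glb f m) /\
  (forall f : I -> L, exists s, is_lub f s).

Definition is_I_complete_sublattice (I : Type) (S : L -> Prop) : Prop :=
  (forall (f : bool -> L) m, (forall b, S (f b)) -> is_glb f m -> S m) /\
  (forall (f : bool -> L) s, (forall b, S (f b)) -> is_lub f s -> S s) /\
  (forall (f : I -> L) m, (forall i, S (f i)) -> is_glb f m -> S m) /\
  (forall (f : I -> L) s, (forall i, S (f i)) -> is_lub f s -> S s).

End Order.

Definition prod_le (J : Type) (L : J -> Type) (le : forall j, L j -> L j -> Prop)
  (x y : forall j, L j) : Prop := forall j, le j (x j) (y j).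

Definition proj2_image (J : Type) (L : J -> Type) (S : (forall j, L j) -> Prop)
  (k l : J) (p : L k * L l) : Prop :=
  exists x, S x /\ x k = fst p /\ x l = snd p.

(* Main.v *)
Require Import Defs.
From mathcomp Require classical_sets.
From Stdlib Require Import Classical ClassicalEpsilon FunctionalExtensionality PropExtensionality List Cantor.

Lemma zorn_sets (T : Type) (P : (T -> Prop) -> Prop) :
  (forall F : (T -> Prop) -> Prop, (forall X, F X -> P X) ->
     (forall X Y, F X -> F Y -> (forall t, X t -> Y t) \/ (forall t, Y t -> X t)) ->
     P (fun t => exists X, F X /\ X t)) ->
  exists A, P A /\ forall B, (forall t, A t -> B t) -> (exists t, B t /\ ~ A t) -> ~ P B.
Proof.
  intros H.
  destruct (@classical_sets.Zorn_bigcup T P) as [A [PA HA]].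
  - intros F HF Htot.
    assert (E : classical_sets.bigcup F (fun X => X) = (fun t => exists X, F X /\ X t)).
    { apply functional_extensionality; intro t; apply propositional_extensionality.
      unfold classical_sets.bigcup; split.
      - intros [X H1 H2]; exists X; auto.
      - intros [X [H1 H2]]; exists X; auto. }
    rewrite E. apply H; [exact HF|].
    intros X Y HX HY. exact (Htot X Y HX HY).
  - exists A; split; [exact PA|].
    intros B HAB [t [Bt nAt]] PB. apply (HA B); [|exact PB].
    split; [exact HAB|]. intro HBA. apply nAt. exact (HBA t Bt).
Qed.

Lemma compare_sets (I : Type) (A B : I -> Prop) :
  (exists h : I -> I, (forall x, A x -> B (h x)) /\ (forall x y, A x -> A y -> h x = h y -> x = y)) \/
  (exists h : I -> I, (forall x, B x -> A (h x)) /\ (forall x y, B x -> B y -> h x = h y -> x = y)).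
Proof.
  pose (P := fun H : I * I -> Prop =>
     (forall p, H p -> A (fst p) /\ B (snd p)) /\
     (forall a b b', H (a, b) -> H (a, b') -> b = b') /\
     (forall a a' b, H (a, b) -> H (a', b) -> a = a')).
  destruct (@zorn_sets (I * I) P) as [H [[H1 [H2 H3]] Hmax]].
  - intros F HF Htot. split; [|split].
    + intros p [X [FX Xp]]. exact (proj1 (HF X FX) p Xp).
    + intros a b b' [X [FX Xp]] [Y [FY Yp]].
      destruct (Htot X Y FX FY) as [S|S].
      * exact (proj1 (proj2 (HF Y FY)) a b b' (S _ Xp) Yp).
      * exact (proj1 (proj2 (HF X FX)) a b b' Xp (S _ Yp)).
    + intros a a' b [X [FX Xp]] [Y [FY Yp]].
      destruct (Htot X Y FX FY) as [S|S].
      * exact (proj2 (proj2 (HF Y FY)) a a' b (S _ Xp) Yp).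
      * exact (proj2 (proj2 (HF X FX)) a a' b Xp (S _ Yp)).
  - destruct (classic (forall a, A a -> exists b, H (a, b))) as [Ha|Ha].
    + left.
      exists (fun a => match excluded_middle_informative (exists b, H (a, b)) with
                       | left e => proj1_sig (constructive_indefinite_description _ e)
                       | right _ => a end).
      split.
      * intros x Ax. destruct (excluded_middle_informative _) as [e|n].
        -- destruct (constructive_indefinite_description _ e) as [b Hb]; simpl.
           exact (proj2 (H1 _ Hb)).
        -- exfalso; exact (n (Ha x Ax)).
      * intros x y Ax Ay.
        destruct (excluded_middle_informative (exists b, H (x, b))) as [e|n];
          [|exfalso; exact (n (Ha x Ax))].
        destruct (excluded_middle_informative (exists b, H (y, b))) as [e'|n];
          [|exfalso; exact (n (Ha y Ay))].
        destruct (constructive_indefinite_description _ e) as [b Hb];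
        destruct (constructive_indefinite_description _ e') as [b' Hb']; simpl.
        intros ->. exact (H3 _ _ _ Hb Hb').
    + destruct (classic (forall b, B b -> exists a, H (a, b))) as [Hb|Hb].
      * right.
        exists (fun b => match excluded_middle_informative (exists a, H (a, b)) with
                       | left e => proj1_sig (constructive_indefinite_description _ e)
                       | right _ => b end).
        split.
        -- intros x Bx. destruct (excluded_middle_informative _) as [e|n].
           ++ destruct (constructive_indefinite_description _ e) as [a Ha']; simpl.
              exact (proj1 (H1 _ Ha')).
           ++ exfalso; exact (n (Hb x Bx)).
        -- intros x y Bx By.
           destruct (excluded_middle_informative (exists a, H (a, x))) as [e|n];
             [|exfalso; exact (n (Hb x Bx))].
           destruct (excluded_middle_informative (exists a, H (a, y))) as [e'|n];
             [|exfalso; exact (n (Hb y By))].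
           destruct (constructive_indefinite_description _ e) as [a Ha'];
           destruct (constructive_indefinite_description _ e') as [a' Ha'']; simpl.
           intros ->. exact (H2 _ _ _ Ha' Ha'').
      * exfalso.
        apply not_all_ex_not in Ha; destruct Ha as [a Ha].
        apply imply_to_and in Ha; destruct Ha as [Aa Ha].
        apply not_all_ex_not in Hb; destruct Hb as [b Hb].
        apply imply_to_and in Hb; destruct Hb as [Bb Hb].
        apply (Hmax (fun p => H p \/ p = (a, b))).
        -- intros t Ht; left; exact Ht.
        -- exists (a, b); split; [right; reflexivity|].
           intro Hab; apply Ha; exists b; exact Hab.
        -- split; [|split].
           ++ intros p [Hp| ->]; [exact (H1 p Hp)| split; assumption].
           ++ intros x y y' [Hx|Ex] [Hx'|Ex'].
              ** exact (H2 _ _ _ Hx Hx').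
              ** injection Ex'; intros; subst. exfalso; apply Ha; eexists; exact Hx.
              ** injection Ex; intros; subst. exfalso; apply Ha; eexists; exact Hx'.
              ** injection Ex; injection Ex'; intros; subst; reflexivity.
           ++ intros x x' y [Hx|Ex] [Hx'|Ex'].
              ** exact (H3 _ _ _ Hx Hx').
              ** injection Ex'; intros; subst. exfalso; apply Hb; eexists; exact Hx.
              ** injection Ex; intros; subst. exfalso; apply Hb; eexists; exact Hx'.
              ** injection Ex; injection Ex'; intros; subst; reflexivity.
Qed.

Lemma nat_inj (I : Type) : infinite I -> exists x : nat -> I, forall m n, x m = x n -> m = n.
Proof.
  intros Hinf.
  assert (Hn : forall l : list I, exists y, ~ In y l).
  { intro l. apply not_all_ex_not. intro H. apply Hinf. exists l. exact H. }
  pose (next := fun l => proj1_sig (constructive_indefinite_description _ (Hn l))).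
  assert (Hnext : forall l, ~ In (next l) l).
  { intro l. unfold next. destruct (constructive_indefinite_description _ (Hn l)); assumption. }
  pose (ls := fix ls n := match n with 0 => nil | S n => next (ls n) :: ls n end).
  exists (fun n => next (ls n)).
  assert (Hin : forall n m, n < m -> In (next (ls n)) (ls m)).
  { intros n m Hlt. induction Hlt.
    - simpl. left. reflexivity.
    - simpl. right. exact IHHlt. }
  intros m n E.
  destruct (PeanoNat.Nat.lt_trichotomy m n) as [Hlt|[Heq|Hlt]]; [|exact Heq|].
  - exfalso. apply (Hnext (ls n)). rewrite <- E. apply Hin. exact Hlt.
  - exfalso. apply (Hnext (ls m)). rewrite E. apply Hin. exact Hlt.
Qed.

Section Hess.
Variable I : Type.

Definition AG (G : (I * I) * I -> Prop) (a : I) := exists z, G ((a, a), z).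

Definition valid (G : (I * I) * I -> Prop) :=
  (forall x y z, G ((x, y), z) -> AG G x /\ AG G y /\ AG G z) /\
  (forall x y, AG G x -> AG G y -> exists z, G ((x, y), z)) /\
  (forall x y z z', G ((x, y), z) -> G ((x, y), z') -> z = z') /\
  (forall x y x' y' z, G ((x, y), z) -> G ((x', y'), z) -> x = x' /\ y = y').

Lemma prod_inj : infinite I -> exists h : I * I -> I, forall p q, h p = h q -> p = q.
Proof.
  intros Hinf. destruct (@nat_inj I Hinf) as [x Hx].
  pose (G0 := fun t : (I * I) * I => exists m n, t = ((x m, x n), x (to_nat (m, n)))).
  pose (P := fun G => (forall t, ~ G t) \/ ((forall t, G0 t -> G t) /\ valid G)).
  assert (HG0 : valid G0).
  { assert (AG0 : forall a, AG G0 a -> exists m, a = x m).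
    { intros a [z [m [n E]]]. injection E as Ea Eb Ez. exists m; exact Ea. }
    assert (AG0' : forall m, AG G0 (x m)).
    { intro m. exists (x (to_nat (m, m))). exists m, m. reflexivity. }
    split; [|split; [|split]].
    - intros a b z [m [n E]]. injection E as Ea Eb Ez. rewrite Ea, Eb, Ez. auto.
    - intros a b Ha Hb. destruct (AG0 a Ha) as [m ->]. destruct (AG0 b Hb) as [n ->].
      exists (x (to_nat (m, n))). exists m, n. reflexivity.
    - intros a b z z' [m [n E]] [m' [n' E']].
      injection E as Ea Eb Ez; injection E' as Ea' Eb' Ez'.
      rewrite Ea in Ea'; rewrite Eb in Eb'. apply Hx in Ea'. apply Hx in Eb'.
      rewrite Ez, Ez', Ea', Eb'. reflexivity.
    - intros a b a' b' z [m [n E]] [m' [n' E']].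
      injection E as Ea Eb Ez; injection E' as Ea' Eb' Ez'.
      rewrite Ez in Ez'. apply Hx in Ez'. assert (C := f_equal of_nat Ez').
      change (of_nat (to_nat (m, n)) = of_nat (to_nat (m', n'))) in C. rewrite !cancel_of_to in C.
      injection C as C1 C2. rewrite Ea, Ea', Eb, Eb', C1, C2. split; reflexivity. }
  destruct (@zorn_sets _ P) as [G [PG Gmax]].
  - intros F HF Htot.
    assert (Hv : forall X t, F X -> X t -> (forall t, G0 t -> X t) /\ valid X).
    { intros X t FX Xt. destruct (HF X FX) as [E|V]; [exfalso; exact (E t Xt)|exact V]. }
    destruct (classic (exists X t, F X /\ X t)) as [[X1 [t1 [F1 X1t]]]|Hne].
    + right. split.
      * intros t Ht. exists X1. split; [exact F1|]. exact (proj1 (Hv X1 t1 F1 X1t) t Ht).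
      * assert (Up : forall X a, F X -> AG X a -> AG (fun t => exists X, F X /\ X t) a).
        { intros X a FX [z Hz]. exists z. exists X. auto. }
        assert (Down : forall a, AG (fun t => exists X, F X /\ X t) a ->
                         exists X, F X /\ AG X a).
        { intros a [z [X [FX Xz]]]. exists X. split; [exact FX|]. exists z. exact Xz. }
        split; [|split; [|split]].
        -- intros a b z [X [FX Xt]].
           destruct (proj1 (proj2 (Hv X _ FX Xt)) a b z Xt) as [Ha [Hb Hz]].
           repeat split; eapply Up; eauto.
        -- intros a b Ha Hb. destruct (Down a Ha) as [X [FX HXa]].
           destruct (Down b Hb) as [Y [FY HYb]].
           destruct HXa as [za HXa]. destruct HYb as [zb HYb].
           destruct (Htot X Y FX FY) as [S|S].
           ++ destruct (proj1 (proj2 (proj2 (Hv Y _ FY HYb))) a b) as [z Hz].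
              ** exists za; apply S; exact HXa.
              ** exists zb; exact HYb.
              ** exists z, Y. auto.
           ++ destruct (proj1 (proj2 (proj2 (Hv X _ FX HXa))) a b) as [z Hz].
              ** exists za; exact HXa.
              ** exists zb; apply S; exact HYb.
              ** exists z, X. auto.
        -- intros a b z z' [X [FX Xz]] [Y [FY Yz]].
           destruct (Htot X Y FX FY) as [S|S].
           ++ exact (proj1 (proj2 (proj2 (proj2 (Hv Y _ FY Yz)))) a b z z' (S _ Xz) Yz).
           ++ exact (proj1 (proj2 (proj2 (proj2 (Hv X _ FX Xz)))) a b z z' Xz (S _ Yz)).
        -- intros a b a' b' z [X [FX Xz]] [Y [FY Yz]].
           destruct (Htot X Y FX FY) as [S|S].
           ++ exact (proj2 (proj2 (proj2 (proj2 (Hv Y _ FY Yz)))) a b a' b' z (S _ Xz) Yz).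
           ++ exact (proj2 (proj2 (proj2 (proj2 (Hv X _ FX Xz)))) a b a' b' z Xz (S _ Yz)).
    + left. intros t [X [FX Xt]]. apply Hne. exists X, t. auto.
  - assert (PG' : (forall t, G0 t -> G t) /\ valid G).
    { destruct PG as [E|V]; [|exact V]. exfalso.
      apply (Gmax G0).
      - intros t Gt. exfalso; exact (E t Gt).
      - exists ((x 0, x 0), x (to_nat (0, 0))). split; [exists 0, 0; reflexivity|apply E].
      - right. split; [intros; assumption|exact HG0]. }
    clear PG. destruct PG' as [G0G [V1 [V2 [V3 V4]]]].
    set (A := AG G) in *.
    assert (Ax : forall m, A (x m)).
    { intro m. exists (x (to_nat (m, m))). apply G0G. exists m, m. reflexivity. }
    assert (F : forall p : I * I, exists z, A (fst p) -> A (snd p) -> G (p, z)).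
    { intros [a b]. destruct (classic (A a /\ A b)) as [[Ha Hb]|N].
      - destruct (V2 a b Ha Hb) as [z Hz]. exists z. intros; exact Hz.
      - exists a. intros Ha Hb. exfalso. apply N. split; assumption. }
    pose (f := fun p => proj1_sig (constructive_indefinite_description _ (F p))).
    assert (Hf : forall a b, A a -> A b -> G ((a, b), f (a, b))).
    { intros a b Ha Hb. unfold f.
      destruct (constructive_indefinite_description _ (F (a, b))) as [z Hz]. simpl. auto. }
    assert (Hx01 : x 0 <> x 1) by (intro E; apply Hx in E; discriminate).
    assert (Hx02 : x 0 <> x 2) by (intro E; apply Hx in E; discriminate).
    assert (Hx12 : x 1 <> x 2) by (intro E; apply Hx in E; discriminate).
    destruct (@compare_sets I A (fun y => ~ A y)) as [[v [Hv1 Hv2]]|[w [Hw1 Hw2]]].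
    +
      exfalso.
      pose (G' := fun t : (I * I) * I =>
        G t \/ exists a b c z tg, A a /\ A b /\ G ((a, b), c) /\ G ((c, tg), z) /\
          snd t = v z /\
          ((fst (fst t) = a /\ snd (fst t) = v b /\ tg = x 0) \/
           (fst (fst t) = v a /\ snd (fst t) = b /\ tg = x 1) \/
           (fst (fst t) = v a /\ snd (fst t) = v b /\ tg = x 2))).
      assert (Hnew : forall a b tg, A a -> A b -> A tg ->
                exists c z, G ((a, b), c) /\ G ((c, tg), z) /\ A z).
      { intros a b tg Ha Hb Ht. destruct (V2 a b Ha Hb) as [c Hc].
        destruct (V1 _ _ _ Hc) as [_ [_ Ac]].
        destruct (V2 c tg Ac Ht) as [z Hz].
        destruct (V1 _ _ _ Hz) as [_ [_ Az]].
        exists c, z. auto. }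
      assert (AA' : forall a, A a -> AG G' a).
      { intros a [z Hz]. exists z. left. exact Hz. }
      assert (VA' : forall a, A a -> AG G' (v a)).
      { intros a Ha. destruct (Hnew a a (x 2) Ha Ha (Ax 2)) as [c [z [H1 [H2 _]]]].
        exists (v z). right. exists a, a, c, z, (x 2). simpl. repeat split; auto. }
      assert (A'D : forall a, AG G' a -> A a \/ exists b, A b /\ a = v b).
      { intros a [w [Hw|[a0 [b0 [c [z [tg [Ha [Hb [_ [_ [_ C]]]]]]]]]]]].
        - left. exact (proj1 (V1 _ _ _ Hw)).
        - simpl in C. destruct C as [[-> _]|[[-> _]|[-> _]]].
          + left; exact Ha.
          + right; exists a0; auto.
          + right; exists a0; auto. }
      apply (Gmax G').
      * intros t Ht. left. exact Ht.
      * destruct (Hnew (x 0) (x 0) (x 0) (Ax 0) (Ax 0) (Ax 0)) as [c [z [H1 [H2 Az]]]].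
        exists ((x 0, v (x 0)), v z). split.
        -- right. exists (x 0), (x 0), c, z, (x 0). simpl. repeat split; auto.
        -- intro Hg. destruct (V1 _ _ _ Hg) as [_ [Hy _]]. exact (Hv1 _ (Ax 0) Hy).
      * right. split; [intros t Ht; left; apply G0G; exact Ht|].
        split; [|split; [|split]].
        -- intros a b z [Hg|[a0 [b0 [c [z0 [tg [Ha [Hb [Hc [Hz [Ez C]]]]]]]]]]].
           ++ destruct (V1 _ _ _ Hg) as [? [? ?]]. auto.
           ++ simpl in Ez, C. subst z.
              destruct (V1 _ _ _ Hz) as [_ [_ Az0]].
              destruct C as [[-> [-> _]]|[[-> [-> _]]|[-> [-> _]]]]; auto.
        -- intros a b Ha Hb.
           destruct (A'D a Ha) as [Ha'|[a0 [Ha0 ->]]];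
           destruct (A'D b Hb) as [Hb'|[b0 [Hb0 ->]]].
           ++ destruct (V2 a b Ha' Hb') as [z Hz]. exists z; left; exact Hz.
           ++ destruct (Hnew a b0 (x 0) Ha' Hb0 (Ax 0)) as [c [z [H1 [H2 _]]]].
              exists (v z). right. exists a, b0, c, z, (x 0). simpl. repeat split; auto.
           ++ destruct (Hnew a0 b (x 1) Ha0 Hb' (Ax 1)) as [c [z [H1 [H2 _]]]].
              exists (v z). right. exists a0, b, c, z, (x 1). simpl. repeat split; auto.
              idtac.
           ++ destruct (Hnew a0 b0 (x 2) Ha0 Hb0 (Ax 2)) as [c [z [H1 [H2 _]]]].
              exists (v z). right. exists a0, b0, c, z, (x 2). simpl. repeat split; auto.
              idtac.
        -- intros a b z z' [Hg|[a0 [b0 [c [z0 [tg [Ha [Hb [Hc [Hz [Ez C]]]]]]]]]]]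
                           [Hg'|[a1 [b1 [c1 [z1 [tg1 [Ha1 [Hb1 [Hc1 [Hz1 [Ez1 C1]]]]]]]]]]];
             simpl in *.
           ++ exact (V3 _ _ _ _ Hg Hg').
           ++ exfalso. destruct (V1 _ _ _ Hg) as [Aa [Ab _]].
              destruct C1 as [[-> [-> _]]|[[-> [-> _]]|[-> [-> _]]]];
                [exact (Hv1 _ Hb1 Ab)|exact (Hv1 _ Ha1 Aa)|exact (Hv1 _ Ha1 Aa)].
           ++ exfalso. destruct (V1 _ _ _ Hg') as [Aa [Ab _]].
              destruct C as [[-> [-> _]]|[[-> [-> _]]|[-> [-> _]]]];
                [exact (Hv1 _ Hb Ab)|exact (Hv1 _ Ha Aa)|exact (Hv1 _ Ha Aa)].
           ++ subst z z'.
              assert (E : a0 = a1 /\ b0 = b1 /\ tg = tg1).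
              { destruct C as [[Ea [Eb Et]]|[[Ea [Eb Et]]|[Ea [Eb Et]]]];
                destruct C1 as [[Ea1 [Eb1 Et1]]|[[Ea1 [Eb1 Et1]]|[Ea1 [Eb1 Et1]]]];
                subst; try (exfalso; apply (Hv1 _ Ha1); assumption);
                try (exfalso; apply (Hv1 _ Hb1); assumption);
                try (exfalso; apply (Hv1 _ Ha); assumption);
                try (exfalso; apply (Hv1 _ Hb); assumption);
                repeat split; try reflexivity; auto. }
              destruct E as [<- [<- <-]].
              rewrite (V3 _ _ _ _ Hc Hc1) in Hz.
              rewrite (V3 _ _ _ _ Hz Hz1). reflexivity.
        -- intros a b a' b' z [Hg|[a0 [b0 [c [z0 [tg [Ha [Hb [Hc [Hz [Ez C]]]]]]]]]]]
                           [Hg'|[a1 [b1 [c1 [z1 [tg1 [Ha1 [Hb1 [Hc1 [Hz1 [Ez1 C1]]]]]]]]]]];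
             simpl in *.
           ++ exact (V4 _ _ _ _ _ Hg Hg').
           ++ exfalso. destruct (V1 _ _ _ Hg) as [_ [_ Az]]. subst z.
              destruct (V1 _ _ _ Hz1) as [_ [_ Az1]]. exact (Hv1 _ Az1 Az).
           ++ exfalso. destruct (V1 _ _ _ Hg') as [_ [_ Az]]. subst z.
              destruct (V1 _ _ _ Hz) as [_ [_ Az0]]. exact (Hv1 _ Az0 Az).
           ++ subst z. destruct (V1 _ _ _ Hz) as [Ac [Atg Az0]].
              destruct (V1 _ _ _ Hz1) as [Ac1 [Atg1 Az1]].
              apply Hv2 in Ez1; [|exact Az0|exact Az1]. subst z1.
              destruct (V4 _ _ _ _ _ Hz Hz1) as [<- <-].
              destruct (V4 _ _ _ _ _ Hc Hc1) as [<- <-].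
              destruct C as [[Ea [Eb Et]]|[[Ea [Eb Et]]|[Ea [Eb Et]]]];
              destruct C1 as [[Ea1 [Eb1 Et1]]|[[Ea1 [Eb1 Et1]]|[Ea1 [Eb1 Et1]]]];
              rewrite Et in Et1; subst;
              first [split; reflexivity
                    | exfalso; apply Hx01; assumption
                    | exfalso; apply Hx02; assumption
                    | exfalso; apply Hx12; assumption
                    | exfalso; apply Hx01; symmetry; assumption
                    | exfalso; apply Hx02; symmetry; assumption
                    | exfalso; apply Hx12; symmetry; assumption].
    +
      pose (u := fun y => match excluded_middle_informative (A y) with
                          | left _ => f (y, x 0) | right _ => f (w y, x 1) end).
      assert (Hu : forall y, A (u y)).
      { intro y. unfold u. destruct (excluded_middle_informative (A y)) as [Ay|nAy].
        - exact (proj2 (proj2 (V1 _ _ _ (Hf _ _ Ay (Ax 0))))).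
        - exact (proj2 (proj2 (V1 _ _ _ (Hf _ _ (Hw1 _ nAy) (Ax 1))))). }
      assert (Huinj : forall y y', u y = u y' -> y = y').
      { intros y y'. unfold u.
        destruct (excluded_middle_informative (A y)) as [Ay|nAy];
        destruct (excluded_middle_informative (A y')) as [Ay'|nAy']; intro E.
        - destruct (V4 _ _ _ _ _ (Hf _ _ Ay (Ax 0)) ltac:(rewrite E; exact (Hf _ _ Ay' (Ax 0)))).
          assumption.
        - destruct (V4 _ _ _ _ _ (Hf _ _ Ay (Ax 0)) ltac:(rewrite E; exact (Hf _ _ (Hw1 _ nAy') (Ax 1)))).
          exfalso; auto.
        - destruct (V4 _ _ _ _ _ (Hf _ _ (Hw1 _ nAy) (Ax 1)) ltac:(rewrite E; exact (Hf _ _ Ay' (Ax 0)))).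
          exfalso; auto.
        - destruct (V4 _ _ _ _ _ (Hf _ _ (Hw1 _ nAy) (Ax 1)) ltac:(rewrite E; exact (Hf _ _ (Hw1 _ nAy') (Ax 1)))).
          apply Hw2; assumption. }
      exists (fun p => f (u (fst p), u (snd p))).
      intros [a b] [a' b'] E; simpl in E.
      destruct (V4 _ _ _ _ _ (Hf _ _ (Hu a) (Hu b)) ltac:(rewrite E; exact (Hf _ _ (Hu a') (Hu b')))) as [E1 E2].
      apply Huinj in E1. apply Huinj in E2. subst. reflexivity.
Qed.
End Hess.

Definition ble (a b : bool) : Prop := a = true -> b = true.

Lemma bool_glb (K : Type) (f : K -> bool) : exists m, is_glb ble f m.
Proof.
  exists (if excluded_middle_informative (forall k, f k = true) then true else false).
  destruct (excluded_middle_informative (forall k, f k = true)) as [H|H]; split.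
  - intros k _. apply H.
  - intros z _ _. reflexivity.
  - intros k E; discriminate.
  - intros z Hz Ez. exfalso. apply H. intro k. apply (Hz k Ez).
Qed.

Lemma bool_lub (K : Type) (f : K -> bool) : exists m, is_lub ble f m.
Proof.
  exists (if excluded_middle_informative (exists k, f k = true) then true else false).
  destruct (excluded_middle_informative (exists k, f k = true)) as [H|H]; split.
  - intros k _. reflexivity.
  - intros z Hz _. destruct H as [k Hk]. apply (Hz k Hk).
  - intros k E. exfalso. apply H. exists k. exact E.
  - intros z _ E; discriminate.
Qed.

Lemma bool_lattice (I : Type) : is_I_complete_lattice ble I.
Proof.
  split; [split; [split; [|split]|split]|split].
  - intros x H; exact H.
  - intros x y z H1 H2 H. apply H2, H1, H.
  - intros [|] [|] H1 H2; try reflexivity.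
    + symmetry; apply H1; reflexivity.
    + apply H2; reflexivity.
  - intro f; apply bool_glb.
  - intro f; apply bool_lub.
  - intro f; apply bool_glb.
  - intro f; apply bool_lub.
Qed.

Section Main.
Variables I J : Type.
Variable e : I -> I * I.
Hypothesis He : forall p, exists n, e n = p.
Variable i0 : I.

Definition Ssmall (x : J -> bool) : Prop :=
  exists g : I -> J, forall j, x j = true -> exists i, g i = j.

Lemma meet_closed (K : Type) (k0 : K) (f : K -> J -> bool) (m : J -> bool) :
  (forall k, Ssmall (f k)) -> is_glb (@prod_le J (fun _ => bool) (fun _ => ble)) f m -> Ssmall m.
Proof.
  intros HS [Hm _]. destruct (HS k0) as [g Hg]. exists g.
  intros j Ej. apply Hg. exact (Hm k0 j Ej).
Qed.

Lemma join_closed (K : Type) (c : I -> K) (Hc : forall k, exists i, c i = k)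
  (f : K -> J -> bool) (m : J -> bool) :
  (forall k, Ssmall (f k)) -> is_lub (@prod_le J (fun _ => bool) (fun _ => ble)) f m -> Ssmall m.
Proof.
  intros HS [Hub Hleast].
  pose (g := fun k => proj1_sig (constructive_indefinite_description _ (HS k))).
  assert (Hg : forall k j, f k j = true -> exists i, g k i = j).
  { intros k. unfold g. destruct (constructive_indefinite_description _ (HS k)) as [gk Hgk].
    exact Hgk. }
  exists (fun n => g (c (fst (e n))) (snd (e n))).
  intros j Ej.
  assert (Hk : exists k, f k j = true).
  { apply NNPP. intro N.
    pose (z := fun j' => if excluded_middle_informative (j' = j) then false else m j').
    assert (Hz : @prod_le J (fun _ => bool) (fun _ => ble) m z).
    { apply Hleast. intros k j' E. unfold z.
      destruct (excluded_middle_informative (j' = j)) as [->|n].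
      - exfalso. apply N. exists k. exact E.
      - exact (Hub k j' E). }
    specialize (Hz j Ej). unfold z in Hz.
    destruct (excluded_middle_informative (j = j)) as [_|n]; [discriminate Hz|apply n; reflexivity]. }
  destruct Hk as [k Hk]. destruct (Hg k j Hk) as [i' Hi'].
  destruct (Hc k) as [i Hi]. destruct (He (i, i')) as [n En].
  exists n. rewrite En. simpl. rewrite Hi. exact Hi'.
Qed.

End Main.

Theorem proposition4p11 (I J : Type) :
  infinite I -> infinite J -> card_lt I J ->
  exists (L : J -> Type) (le : forall j, L j -> L j -> Prop),
    (forall j, is_I_complete_lattice (le j) I) /\
    exists S T : (forall j, L j) -> Prop,
      is_I_complete_sublattice (@prod_le J L le) I S /\
      is_I_complete_sublattice (@prod_le J L le) I T /\
      (exists x, ~ (S x <-> T x)) /\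
      (forall k l : J, k <> l ->
         forall p : L k * L l, @proj2_image J L S k l p <-> @proj2_image J L T k l p).
Proof.
  intros HI HJ [_ Hlt].
  assert (Hne : forall l : list I, exists y, ~ In y l).
  { intro l. apply not_all_ex_not. intro H. apply HI. exists l. exact H. }
  destruct (Hne nil) as [i0 _].
  destruct (Hne (i0 :: nil)) as [i1 Hi1].
  assert (Hi01 : i1 <> i0) by (intro E; apply Hi1; left; symmetry; exact E).
  destruct (@prod_inj I HI) as [h Hh].
  pose (e := fun n => match excluded_middle_informative (exists p, h p = n) with
                      | left E => proj1_sig (constructive_indefinite_description _ E)
                      | right _ => (i0, i0) end).
  assert (He : forall p, exists n, e n = p).
  { intro p. exists (h p). unfold e.
    destruct (excluded_middle_informative (exists q, h q = h p)) as [E|N].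
    - destruct (constructive_indefinite_description _ E) as [q Hq]. simpl. apply Hh. exact Hq.
    - exfalso. apply N. exists p. reflexivity. }
  exists (fun _ => bool), (fun _ => ble).
  split; [intro j; apply bool_lattice|].
  exists (@Ssmall I J), (fun _ => True).
  split; [|split; [|split]].
  - split; [|split; [|split]].
    + intros f m Hf Hm. exact (@meet_closed I J bool true f m Hf Hm).
    + intros f m Hf Hm.
      apply (@join_closed I J e He bool (fun i => if excluded_middle_informative (i = i0) then true else false)) with (f := f); [|exact Hf|exact Hm].
      intros [|].
      * exists i0. destruct (excluded_middle_informative (i0 = i0)) as [_|n]; [reflexivity|exfalso; apply n; reflexivity].
      * exists i1. destruct (excluded_middle_informative (i1 = i0)) as [E|_]; [exfalso; exact (Hi01 E)|reflexivity].
    + intros f m Hf Hm. exact (@meet_closed I J I i0 f m Hf Hm).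
    + intros f m Hf Hm.
      apply (@join_closed I J e He I (fun i => i)) with (f := f); [|exact Hf|exact Hm].
      intro k; exists k; reflexivity.
  - split; [|split; [|split]]; intros; exact Logic.I.
  - exists (fun _ => true). intros [_ H]. specialize (H Logic.I).
    destruct H as [g Hg].
    apply Hlt.
    exists (fun j => proj1_sig (constructive_indefinite_description _ (Hg j eq_refl))).
    intros x y E.
    destruct (constructive_indefinite_description _ (Hg x eq_refl)) as [ix Hx].
    destruct (constructive_indefinite_description _ (Hg y eq_refl)) as [iy Hy].
    simpl in E. subst. reflexivity.
  - intros k l Hkl p. split.
    + intros [x [_ [E1 E2]]]. exists x. split; [exact Logic.I|split; assumption].
    + intros _.
      exists (fun j => if excluded_middle_informative (j = k) then fst p
               else if excluded_middle_informative (j = l) then snd p else false).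
      split; [|split].
      * exists (fun i => if excluded_middle_informative (i = i0) then k else l).
        intros j Ej.
        destruct (excluded_middle_informative (j = k)) as [->|nk].
        -- exists i0. destruct (excluded_middle_informative (i0 = i0)) as [_|n]; [reflexivity|exfalso; apply n; reflexivity].
        -- destruct (excluded_middle_informative (j = l)) as [->|nl]; [|discriminate Ej].
           exists i1. destruct (excluded_middle_informative (i1 = i0)) as [E|_]; [exfalso; exact (Hi01 E)|reflexivity].
      * destruct (excluded_middle_informative (k = k)) as [_|n]; [reflexivity|exfalso; apply n; reflexivity].
      * destruct (excluded_middle_informative (l = k)) as [E|_]; [exfalso; apply Hkl; symmetry; exact E|].
        destruct (excluded_middle_informative (l = l)) as [_|n]; [reflexivity|exfalso; apply n; reflexivity].
Qed.
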